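(* Let $f:2^{\mathcal{E}_x}\to\mathbb{R}_{\ge 0}$ be normalized, monotone and submodular, and consider $(\mathrm{P}_1)$ under the constraint TU$_b$ (i.e., maximize $f(\mathcal{E})$ over $\mathcal{E}\subseteq\mathcal{E}_x$ with $|\mathcal{E}|\le k$ and some vertex cover $\mathcal{V}$ of $\mathcal{E}$ with $|\mathcal{V}|\le b$), with optimal value $\mathrm{OPT}_1$. Then the algorithm Edge-Greedy (described in the context) returns a feasible solution $\mathcal{E}_{\mathrm{grd}}$ of this problem with $f(\mathcal{E}_{\mathrm{grd}})\ge\alpha_e(b,k)\cdot\mathrm{OPT}_1$, where $\alpha_e(b,k)=1-\exp\big(-\min\{1,b/k\}\big)$.
   Context: $\mathcal{G}=(\mathcal{V}_x,\mathcal{E}_x)$ is a finite simple undirected graph; $b,k\ge1$ are integers. For $\mathcal{V}\subseteq\mathcal{V}_x$, $\mathsf{edges}(\mathcal{V})$ is the set of edges incident to at least one vertex of $\mathcal{V}$. A set function $h$ is normalized if $h(\varnothing)=0$, monotone if $h(A)\le h(B)$ for $A\subseteq B$, submodular if $h(A)+h(B)\ge h(A\cup B)+h(A\cap B)$. Edge-Greedy: Phase I: start with $\mathcal{E}_{\mathrm{grd}}=\varnothing$; for $\min(b,k)$ iterations (or until no edges remain), add an edge $e^\star\in\arg\max_{e\in\mathcal{E}_x\setminus\mathcal{E}_{\mathrm{grd}}}f(\mathcal{E}_{\mathrm{grd}}\cup\{e\})$. Then let $\mathcal{V}_{\mathrm{grd}}$ be a vertex cover of $\mathcal{E}_{\mathrm{grd}}$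 obtained by choosing one endpoint of each selected edge. Phase II (only if $k>b$): let $\mathcal{E}_{\mathrm{free}}=\mathsf{edges}(\mathcal{V}_{\mathrm{grd}})\setminus\mathcal{E}_{\mathrm{grd}}$; for $\min(|\mathcal{E}_{\mathrm{free}}|,k-b)$ iterations, add an edge $e^\star\in\arg\max_{e\in\mathcal{E}_{\mathrm{free}}\setminus\mathcal{E}_{\mathrm{grd}}}f(\mathcal{E}_{\mathrm{grd}}\cup\{e\})$. Return $(\mathcal{V}_{\mathrm{grd}},\mathcal{E}_{\mathrm{grd}})$. *)

(* Defs.v *)
From Stdlib Require Import Reals.
From HB Require Import structures.
From mathcomp Require Import all_boot.

Set Implicit Arguments.
Unset Strict Implicit.
Unset Printing Implicit Defensive.

Section EdgeGreedy.

Variable V : finType.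
(* A finite simple undirected graph: a symmetric irreflexive relation g. *)
Variable g : rel V.

Definition is_edge (A : {set V}) : bool :=
  [exists u, exists v, g u v && (A == [set u; v])].

Definition edge := {A : {set V} | is_edge A}.

Definition incident (v : V) (e : edge) : bool := v \in val e.

Definition vcover (Vc : {set V}) (E : {set edge}) : Prop :=
  forall e, e \in E -> exists2 v, v \in Vc & incident v e.

Definition edges_of (Vc : {set V}) : {set edge} :=
  [set e | [exists v in Vc, incident v e]].

Definition feasible (b k : nat) (E : {set edge}) : Prop :=
  (#|E| <= k)%N /\ exists Vc : {set V}, vcover Vc E /\ (#|Vc| <= b)%N.

Definition feasibleb (b k : nat) (E : {set edge}) : bool :=
  (#|E| <= k)%N &&
  [exists Vc : {set V}, [forall e in E, [exists v in Vc, incident v e]]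
                        && (#|Vc| <= b)%N].

Variable f : {set edge} -> R.

(* OPT_1 := max of f over feasible sets (0 is the value of the feasible
   empty set when f is normalized and nonnegative). *)
Definition OPT1 (b k : nat) : R :=
  foldr Rmax R0 [seq f E | E <- enum [set: {set edge}] & feasibleb b k E].

(* One greedy phase: s is a sequence of successive greedy choices among the
   candidate set C, starting from the current selection S. *)
Fixpoint greedy_seq (C S : {set edge}) (s : seq edge) : Prop :=
  match s with
  | [::] => True
  | x :: s' =>
      x \in C /\ x \notin S /\
      (forall y, y \in C -> y \notin S -> Rle (f (y |: S)) (f (x |: S))) /\
      greedy_seq C (x |: S) s'
  end.

(* A complete run of Edge-Greedy producing (Vgrd, Egrd).
   s1: phase I choices; c: the endpoint chosen for each phase-I edge;
   s2: phase II choices (zero iterations when k <= b since k - b = 0). *)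
Definition edge_greedy_run (b k : nat) (s1 : seq edge) (c : edge -> V)
    (s2 : seq edge) (Vgrd : {set V}) (Egrd : {set edge}) : Prop :=
  let E1 := [set x in s1] in
  let Efree := edges_of Vgrd :\: E1 in
  [/\ greedy_seq setT set0 s1,
      size s1 = minn (minn b k) #|[set: edge]|,
      (forall e, e \in E1 -> incident (c e) e)
    & Vgrd = c @: E1] /\
  [/\ greedy_seq Efree E1 s2,
      size s2 = minn #|Efree| (k - b)
    & Egrd = E1 :|: [set x in s2]].

End EdgeGreedy.

Definition alpha_e (b k : nat) : R :=
  Rminus R1 (exp (Ropp (Rmin R1 (Rdiv (INR b) (INR k))))).

(* Main.v *)
Require Import Defs.
From Stdlib Require Import Reals Lra.
From HB Require Import structures.
From mathcomp Require Import all_boot zify.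
Local Open Scope R_scope.

Lemma union_bound (V : finType) (g : rel V) (f : {set edge g} -> R)
  (f_mono : forall A B : {set edge g}, A \subset B -> Rle (f A) (f B))
  (f_submod : forall A B : {set edge g},
      Rle (Rplus (f (A :|: B)) (f (A :&: B))) (Rplus (f A) (f B)))
  (S : {set edge g}) (d : R) (s : seq (edge g)) :
  (forall o, o \in s -> (f (o |: S) - f S <= d)) ->
  (f (S :|: [set x in s]) <= f S + INR (size s) * d)%R.
Proof.
elim: s => [|o s IH] H.
  have -> : [set x in [::]] = (set0 : {set edge g}) by apply/setP => y; rewrite !inE.
  rewrite setU0 /=; lra.
have H1 := IH (fun y hy => H y (ltac:(by rewrite inE hy orbT))).
have H2 := H o (mem_head _ _).
have E : S :|: [set x in o :: s] = (S :|: [set x in s]) :|: (o |: S).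
  apply/setP => y; rewrite !inE; by case: (y \in S); case: (y == o); case: (y \in s).
have M : Rle (f S) (f ((S :|: [set x in s]) :&: (o |: S))).
  apply: f_mono; apply/subsetIP; split; [exact: subsetUl | exact: subsetUr].
have SM := f_submod (S :|: [set x in s]) (o |: S).
rewrite E; change (size (o :: s)) with (size s).+1; rewrite S_INR; lra.
Qed.

Lemma greedy_props (V : finType) (g : rel V) (f : {set edge g} -> R)
  (C S : {set edge g}) (s : seq (edge g)) :
  greedy_seq f C S s -> [/\ uniq s, all (fun x => x \notin S) s & all (fun x => x \in C) s].
Proof.
elim: s S => [|x s IH] S //= [xC [xS [_ G]]].
have [u a1 a2] := IH _ G.
rewrite u xC xS a2 /=.
have Hx : x \notin s.
  apply/negP => xs; move/allP: a1 => /(_ x xs); by rewrite setU11.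
rewrite Hx; split => //.
apply/allP => y ys; move/allP: a1 => /(_ y ys); rewrite !inE; by case/norP.
Qed.
Lemma greedy_bound (V : finType) (g : rel V) (f : {set edge g} -> R)
  (f_mono : forall A B : {set edge g}, A \subset B -> Rle (f A) (f B))
  (f_submod : forall A B : {set edge g},
      Rle (Rplus (f (A :|: B)) (f (A :&: B))) (Rplus (f A) (f B)))
  (k : nat) (hk : (1 <= k)%N) (O : {set edge g}) (hO : (#|O| <= k)%N)
  (s : seq (edge g)) (S : {set edge g}) :
  greedy_seq f setT S s ->
  f O - f (S :|: [set x in s]) <= (1 - / INR k) ^ (size s) * (f O - f S).
Proof.
have kpos : 1 <= INR k by apply: (le_INR 1); apply/leP.
have q0 : 0 <= 1 - / INR k.
  have : / INR k <= 1 by rewrite -Rinv_1; apply: Rinv_le_contravar; lra.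
  lra.
elim: s S => [|x s IH] S /=.
  move=> _; have -> : [set x in [::]] = (set0 : {set edge g}) by apply/setP => y; rewrite !inE.
  rewrite setU0; lra.
move=> [_ [xS [Hg G]]].
have E : S :|: [set y in x :: s] = (x |: S) :|: [set y in s].
  apply/setP => y; rewrite !inE; by case: (y \in S); case: (y == x); case: (y \in s).
rewrite E.
have IH' := IH _ G.
have [d dE] : {d | d = f (x |: S) - f S} by eexists.
have d0 : 0 <= d by rewrite dE; have := f_mono S (x |: S) (subsetUr _ _); lra.
have Hd : forall o, o \in enum O -> f (o |: S) - f S <= d.
  move=> o _; case oS: (o \in S).
    have -> : o |: S = S by apply/setP => y; rewrite !inE; case: eqP => // ->.
    lra.
  have := Hg o (in_setT _) (negbT oS); rewrite dE; lra.
have UB := @union_bound V g f f_mono f_submod S d (enum O) Hd.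
rewrite set_enum -cardE in UB.
have MO := f_mono O (S :|: O) (subsetUr _ _).
have KO : INR #|O| <= INR k by apply: le_INR; apply/leP.
have Kd : INR #|O| * d <= INR k * d by apply: Rmult_le_compat_r.
have step : f O - f (x |: S) <= (1 - / INR k) * (f O - f S).
  have : f O - f S <= INR k * d.
    set a := INR #|O| * d in UB Kd. set b := INR k * d in Kd *. lra.
  move=> h.
  have : (f O - f S) * / INR k <= d.
    apply (Rmult_le_reg_l (INR k)); first lra.
    rewrite -Rmult_assoc (Rmult_comm (INR k)) Rmult_assoc Rinv_r; lra.
  have -> : (1 - / INR k) * (f O - f S) = (f O - f S) - (f O - f S) * / INR k by ring.
  rewrite dE in h *; lra.
have pw : 0 <= (1 - / INR k) ^ size s by apply: pow_le.
apply: Rle_trans IH' _.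
apply: Rle_trans (Rmult_le_compat_l _ _ _ pw step) _.
right; simpl; ring.
Qed.

Lemma exp_pow_n (x : R) (n : nat) : exp x ^ n = exp (INR n * x).
Proof.
elim: n => [|n IH] /=; first by rewrite Rmult_0_l exp_0.
rewrite IH -exp_plus; f_equal; case: n {IH} => [|n] /=; ring.
Qed.

Lemma exp_le (x y : R) : x <= y -> exp x <= exp y.
Proof.
move=> h; case: (Rle_lt_or_eq_dec _ _ h) => [lt|->]; last by right.
left; exact: exp_increasing.
Qed.

Lemma ratio (b k : nat) (hk : (1 <= k)%N) :
  (1 - / INR k) ^ (minn b k) <= exp (- Rmin 1 (INR b / INR k)).
Proof.
have kpos : 1 <= INR k by apply: (le_INR 1); apply/leP.
have q0 : 0 <= 1 - / INR k.
  have : / INR k <= 1 by rewrite -Rinv_1; apply: Rinv_le_contravar; lra.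
  lra.
apply: Rle_trans (_ : exp (- / INR k) ^ minn b k <= _).
  apply: pow_incr; split => //; have := exp_ineq1_le (- / INR k); lra.
rewrite exp_pow_n; apply: exp_le.
suff : Rmin 1 (INR b / INR k) <= INR (minn b k) * / INR k by lra.
case: (leqP b k) => h.
  exact: Rmin_r.
rewrite Rinv_r; [exact: Rmin_l | lra].
Qed.

Lemma foldr_max_bound (T : Type) (h : T -> R) (a c : R) (l : seq T) :
  0 <= a -> 0 <= c -> (forall x, List.In x l -> a * h x <= c) ->
  a * foldr Rmax R0 (map h l) <= c.
Proof.
move=> a0 c0; elim: l => [|x l IH] H /=; first lra.
have H1 := H x (or_introl erefl).
have H2 := IH (fun y hy => H y (or_intror hy)).
rewrite {1}/Rmax; case: (Rle_dec _ _) => _; lra.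
Qed.

Theorem lemma3 (V : finType) (g : rel V)
  (g_sym : symmetric g) (g_irr : irreflexive g)
  (b k : nat) (hb : (1 <= b)%N) (hk : (1 <= k)%N)
  (f : {set edge g} -> R)
  (f_nonneg : forall E, Rle R0 (f E))
  (f_norm : f set0 = R0)
  (f_mono : forall A B : {set edge g}, A \subset B -> Rle (f A) (f B))
  (f_submod : forall A B : {set edge g},
      Rle (Rplus (f (A :|: B)) (f (A :&: B))) (Rplus (f A) (f B)))
  (s1 : seq (edge g)) (c : edge g -> V) (s2 : seq (edge g))
  (Vgrd : {set V}) (Egrd : {set edge g}) :
  edge_greedy_run f b k s1 c s2 Vgrd Egrd ->
  feasible b k Egrd /\ Rle (Rmult (alpha_e b k) (OPT1 f b k)) (f Egrd).
Proof.
move=> [[G1 sz1 Hc HV] [G2 sz2 HE]].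
have [u1 _ _] := @greedy_props V g f _ _ _ G1.
have [_ _ a2] := @greedy_props V g f _ _ _ G2.
have cE1 : #|[set x in s1]| = size s1 by rewrite cardsE; apply/card_uniqP.
have s1b : (size s1 <= minn b k)%N by rewrite sz1 geq_minl.
have s1T : (size s1 <= #|[set: edge g]|)%N by rewrite sz1 geq_minr.
split.
  split.
    rewrite HE; apply: leq_trans (leq_card_setU _ _) _.
    rewrite cE1 cardsE.
    have h1 := card_size s2.
    have h2 : (size s2 <= k - b)%N by rewrite sz2 geq_minr.
    move: s1b h1 h2; move: (size s1) (#|s2|) (size s2) => x t y. lia.
  exists Vgrd; split.
    move=> e; rewrite HE inE => /orP [eE1|es2].
      exists (c e); last exact: Hc.
      by rewrite HV; apply: imset_f.
    rewrite inE in es2; move/allP: a2 => /(_ e es2); rewrite inE => /andP [_].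
    rewrite inE => /exists_inP [v vV inc]; by exists v.
  rewrite HV; apply: leq_trans (leq_imset_card _ _) _.
  rewrite cE1; apply: leq_trans s1b _; exact: geq_minl.
have kpos : 1 <= INR k by apply: (le_INR 1); apply/leP.
set m := Rmin 1 (INR b / INR k).
have m0 : 0 <= m.
  apply: Rmin_glb; first lra.
  apply: Rmult_le_pos; first exact: pos_INR.
  left; apply: Rinv_0_lt_compat; lra.
have em1 : exp (- m) <= 1 by rewrite -exp_0; apply: exp_le; lra.
have ep := exp_pos (- m).
have al0 : 0 <= alpha_e b k by rewrite /alpha_e -/m; lra.
have al1 : alpha_e b k <= 1 by rewrite /alpha_e -/m; lra.
have E1g : f [set x in s1] <= f Egrd by apply: f_mono; rewrite HE; exact: subsetUl.
have key : forall O : {set edge g}, (#|O| <= k)%N -> alpha_e b k * f O <= f [set x in s1].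
  move=> O hO.
  have fO := f_nonneg O.
  case: (leqP (minn b k) #|[set: edge g]|) => h.
    rewrite (minn_idPl h) in sz1.
    have GB := @greedy_bound V g f f_mono f_submod k hk O hO s1 set0 G1.
    rewrite set0U f_norm sz1 in GB.
    have RT := @ratio b k hk.
    have : (1 - / INR k) ^ minn b k * f O <= exp (- m) * f O
      by apply: Rmult_le_compat_r.
    rewrite /alpha_e -/m; lra.
  have E1T : [set x in s1] = setT.
    apply/eqP; rewrite eqEcard subsetT /= cE1 sz1.
    rewrite (minn_idPr (ltnW h)) //.
  rewrite E1T.
  apply: Rle_trans (f_mono O _ (subsetT _)).
  have := Rmult_le_compat_r (f O) _ _ fO al1; lra.
apply: foldr_max_bound => //.
move=> E /(@List.filter_In _ _ _ _) [_ hE].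
apply: Rle_trans (key E _) E1g.
by move/andP: hE => [].
Qed.
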